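(* Let $k\ge1$ and $\ell\ge1$. Then $$|\{n\in A_{2k}:\max\mathcal{CG}(n)=\max\mathcal{CG}_1(n)=F_{2k+2\ell}\}|=F_{2\ell+1},$$ $$|\{n\in A_{2k}:\max\mathcal{CG}(n)=\max\mathcal{CG}_2(n)=F_{2k+2\ell}\}|=F_{2\ell}.$$
   Context: Fibonacci numbers: $F_1=F_2=1$, $F_{n+1}=F_n+F_{n-1}$ for $n\ge2$. Chung–Graham decomposition: every positive integer $n$ has a unique representation $n=\sum_{i\ge1}c_iF_{2i}$ with $c_i\in\{0,1,2\}$, only finitely many nonzero, such that whenever $c_i=c_j=2$ with $i<j$ there is $k$ with $i<k<j$ and $c_k=0$. Let $\mathcal{CG}(n)$ be the set of $F_{2i}$ with $c_i\neq0$, $\mathcal{CG}_1(n)$ the set of $F_{2i}$ with $c_i=1$, and $\mathcal{CG}_2(n)$ the set of $F_{2i}$ with $c_i=2$. For $k\ge1$, $A_{2k}=\{n\ge1:\min\mathcal{CG}(n)=F_{2k}\}$. *)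

(* Defs.v *)
From mathcomp Require Import all_boot.
From Stdlib Require Import ClassicalEpsilon.
Set Implicit Arguments. Unset Strict Implicit. Unset Printing Implicit Defensive.

Fixpoint fib (n : nat) : nat :=
  match n with
  | 0 => 0
  | 1 => 1
  | (m.+1 as p).+1 => fib p + fib m
  end.

(* A coefficient list c encodes c_i = c`_(i-1), the coefficient of F_{2i}, i >= 1. *)
Definition cgval (c : seq nat) : nat :=
  \sum_(j < size c) nth 0 c j * fib (2 * j.+1).

(* Chung-Graham admissibility; no trailing zeros so that the list is canonical. *)
Definition cg_valid (c : seq nat) : Prop :=
  all (fun x => x <= 2) c /\ last 1 c != 0 /\
  (forall i j, i < j < size c -> nth 0 c i = 2 -> nth 0 c j = 2 ->
     exists k, i < k < j /\ nth 0 c k = 0).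

(* The (unique, by Chung-Graham) decomposition of n. *)
Definition cg_coeffs (n : nat) : seq nat :=
  epsilon (inhabits [::]) (fun c => cg_valid c /\ cgval c = n).

Definition CGsel (p : nat -> bool) (n : nat) : seq nat :=
  let c := cg_coeffs n in
  [seq fib (2 * j.+1) | j <- iota 0 (size c) & p (nth 0 c j)].
Definition CG := CGsel (fun x => x != 0).
Definition CG1 := CGsel (fun x => x == 1).
Definition CG2 := CGsel (fun x => x == 2).

Definition is_min (x : nat) (s : seq nat) : Prop := x \in s /\ all (fun y => x <= y) s.
Definition is_max (x : nat) (s : seq nat) : Prop := x \in s /\ all (fun y => y <= x) s.

Definition in_A (k n : nat) : Prop := 1 <= n /\ is_min (fib (2 * k)) (CG n).

Definition card_is (P : nat -> Prop) (m : nat) : Prop :=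
  exists s : seq nat, uniq s /\ (forall n, n \in s <-> P n) /\ size s = m.

(* Main.v *)
Require Import Defs.
From mathcomp Require Import all_boot zify.
From Stdlib Require Import ClassicalEpsilon.
Set Implicit Arguments. Unset Strict Implicit. Unset Printing Implicit Defensive.


Lemma fibSS n : fib n.+2 = fib n.+1 + fib n. Proof. by []. Qed.
Lemma fib_pos n : 0 < fib n.+1.
Proof. elim: n => // n IH; rewrite fibSS; lia. Qed.
Lemma fib_leS n : fib n <= fib n.+1.
Proof. case: n => // n; rewrite fibSS; lia. Qed.
Lemma fib_mono m n : m <= n -> fib m <= fib n.
Proof.
move=> /subnK <-; elim: (n - m) => // d IH.
rewrite addSn; exact: leq_trans IH (fib_leS _).
Qed.
Lemma fib_ltS n : 2 <= n -> fib n < fib n.+1.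
Proof. case: n => [|[|n]] // _; have := fib_pos n; rewrite [fib n.+3]fibSS; lia. Qed.
Lemma fib_lt m n : 2 <= m -> m < n -> fib m < fib n.
Proof.
move=> h2 hmn; apply: (leq_trans (fib_ltS h2)); exact: fib_mono.
Qed.
Lemma fib_le_iff m n : 2 <= m -> 2 <= n -> (fib m <= fib n) <-> m <= n.
Proof.
move=> hm hn; split; last exact: fib_mono.
move=> h; rewrite leqNgt; apply/negP => /(fib_lt hn); lia.
Qed.
Lemma fib_inj m n : 2 <= m -> 2 <= n -> fib m = fib n -> m = n.
Proof.
move=> hm hn e; have := fib_le_iff hm hn; have := fib_le_iff hn hm.
rewrite e leqnn; move=> [h1 _] [h2 _]; have := h1 isT; have := h2 isT; lia.
Qed.

Fixpoint ok (s : bool) (r : seq nat) : bool :=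
  match r with
  | [::] => true
  | x :: r' => match x with
               | 0 => ok true r'
               | 1 => ok s r'
               | 2 => s && ok false r'
               | _ => false
               end
  end.

Definition pairP (c : seq nat) : Prop :=
  forall i j, i < j < size c -> nth 0 c i = 2 -> nth 0 c j = 2 ->
     exists k, i < k < j /\ nth 0 c k = 0.
Definition lcP (r : seq nat) : Prop :=
  forall j, j < size r -> nth 0 r j = 2 -> exists k, k < j /\ nth 0 r k = 0.

Lemma pair_cons x r : pairP (x :: r) -> pairP r.
Proof.
move=> h i j hij hi hj; have [k [hk hk0]] := h i.+1 j.+1 ltac:(simpl; lia) hi hj.
case: k hk hk0 => [|k] hk hk0; first lia.
exists k; split => //; lia.
Qed.

Lemma okP s r : ok s r <-> [/\ all (fun x => x <= 2) r, pairP r & (~~ s -> lcP r)].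
Proof.
elim: r s => [|x r IH] s.
  split=> [_|//]; split => //; try (by move=> i j /=; lia); try (by move=> _ j /=).
split.
- case: x => [|[|[|x]]] //=.
  + move=> /IH [ha hp hl]; split => //.
    * move=> [|i] [|j] //=. move=> hij hi hj.
      have [k [hk hk0]] := hp i j ltac:(lia) hi hj. exists k.+1; split=> //; lia.
    * move=> _ [|j] //= _ _; exists 0; split => //.
  + move=> /IH [ha hp hl]; split => //.
    * move=> [|i] [|j] //=. move=> hij hi hj.
      have [k [hk hk0]] := hp i j ltac:(lia) hi hj. exists k.+1; split=> //; lia.
    * move=> hs [|j] //= hj hj2; have [k [hk hk0]] := hl hs j ltac:(lia) hj2.
      exists k.+1; split => //; lia.
  + case: s => //= /IH [ha hp hl]; split => //.
    move=> [|i] [|j] //=.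
    * move=> hij _ hj; have [k [hk hk0]] := hl isT j ltac:(lia) hj.
      exists k.+1; split => //; lia.
    * move=> hij hi hj.
      have [k [hk hk0]] := hp i j ltac:(lia) hi hj. exists k.+1; split=> //; lia.
- move=> [/= /andP [hx ha] hp hl].
  have hp' := pair_cons hp.
  case: x hx hp hl => [|[|[|x]]] // _ hp hl /=.
  + by apply/IH; split.
  + apply/IH; split => // hs j hj hj2.
    have [[|k] [hk hk0]] := hl hs j.+1 hj hj2 => //.
    exists k; split => //; lia.
  + case: s hl => [_|hl]; last by have [k [hk _]] := hl isT 0 isT erefl.
    apply/IH; split => // _ j hj hj2.
    have [[|k] [hk hk0]] := hp 0 j.+1 ltac:(simpl; lia) erefl hj2; first lia.
    exists k; split => //; lia.
Qed.

Lemma fib_add2 n : fib (n + 2) = fib (n + 1) + fib n.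
Proof. by rewrite !addn2 addn1 fibSS. Qed.

Lemma fib_rec a b c : b = c.+1 -> a = c.+2 -> fib a = fib b + fib c.
Proof. by move=> -> ->. Qed.

Lemma pair_rev c : pairP c -> pairP (rev c).
Proof.
move=> h i j; rewrite size_rev => hij.
rewrite !nth_rev; try lia.
move=> hi hj.
have [k' [hk' hk'0]] := h (size c - j.+1) (size c - i.+1) ltac:(lia) hj hi.
exists (size c - k'.+1); split; first lia.
rewrite nth_rev; last lia.
by have -> : size c - (size c - k'.+1).+1 = k' by lia.
Qed.

Lemma last_rev1 r : last 1 (rev r) = head 1 r.
Proof. by case: r => // x r; rewrite rev_cons last_rcons. Qed.

Lemma validP r : cg_valid (rev r) <-> ok true r /\ head 1 r != 0.
Proof.
rewrite /cg_valid last_rev1 all_rev okP; split.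
- move=> [ha [hl hp]]; split => //; split => //.
  by rewrite -(revK r); apply: pair_rev.
- move=> [[ha hp _] hl]; split => //; split => //; exact: pair_rev.
Qed.

Fixpoint rv (r : seq nat) : nat :=
  match r with [::] => 0 | x :: r' => x * fib (2 * (size r').+1) + rv r' end.

Lemma cgval_rcons d x : cgval (rcons d x) = cgval d + x * fib (2 * (size d).+1).
Proof.
rewrite /cgval size_rcons big_ord_recr /= nth_rcons ltnn eqxx; congr (_ + _).
by apply: eq_bigr => i _; rewrite nth_rcons ltn_ord.
Qed.

Lemma cgval_rev r : cgval (rev r) = rv r.
Proof.
elim: r => [|x r IH]; first by rewrite /cgval big_ord0.
by rewrite rev_cons cgval_rcons IH size_rev /= addnC.
Qed.

Lemma rv_cons x r : rv (x :: r) = x * fib (2 * size r + 2) + rv r.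
Proof. have -> : 2 * size r + 2 = 2 * (size r).+1 by lia. by []. Qed.

Lemma rv_bound s r : ok s r -> rv r < fib (2 * size r + (if s then 2 else 1)).
Proof.
elim: r s => [|x r IH] s; first by case: s.
have h1 : fib (2 * size r + 1) <= fib (2 * size r + 2) by apply: fib_mono; lia.
have e3 : fib (2 * size (x :: r) + 1) = fib (2 * size r + 2) + fib (2 * size r + 1).
  apply: fib_rec => /=; lia.
have e4 : fib (2 * size (x :: r) + 2) = fib (2 * size r + 3) + fib (2 * size r + 2).
  apply: fib_rec => /=; lia.
have e3' : fib (2 * size r + 3) = fib (2 * size r + 2) + fib (2 * size r + 1).
  apply: fib_rec; lia.
rewrite rv_cons => h.
have -> : fib (2 * size (x :: r) + (if s then 2 else 1)) =
  if s then fib (2 * size r + 3) + fib (2 * size r + 2)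
  else fib (2 * size r + 2) + fib (2 * size r + 1) by move: h; case: s.
clear e3 e4; case: x h => [|[|[|x]]] h; rewrite /= in h => //.
- have := IH _ h; case: s; lia.
- move: h; case: s => h; have := IH _ h; lia.
- case: s h => //= h; have := IH _ h; lia.
Qed.

Lemma ok_tail s x r : ok s (x :: r) -> x <= 2 /\ rv r < fib (2 * size r + 2).
Proof.
have h1 : fib (2 * size r + 1) <= fib (2 * size r + 2) by apply: fib_mono; lia.
case: x => [|[|[|x]]] //= h; split => //.
- by have := rv_bound h.
- have := rv_bound h; move: h; case: s => _ /=; lia.
- move: h => /andP [_ h]; have := rv_bound h; lia.
Qed.

Lemma rv_inj s r1 r2 : size r1 = size r2 -> ok s r1 -> ok s r2 -> rv r1 = rv r2 -> r1 = r2.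
Proof.
elim: r1 s r2 => [|x1 r1 IH] s [|x2 r2] // [es] h1 h2.
rewrite !rv_cons => e.
have [hx1 hb1] := ok_tail h1; have [hx2 hb2] := ok_tail h2.
rewrite es in hb1 e.
have ex : x1 = x2.
  clear IH h1 h2; move: hx1 hx2 e hb1 hb2; set F := fib _; move: (rv r1) (rv r2) => a b.
  case: x1 => [|[|[|?]]] //; case: x2 => [|[|[|?]]] //; lia.
subst x2; congr (_ :: _).
have eb : rv r1 = rv r2 by lia.
case: x1 h1 h2 {hx1 hx2 e} => [|[|[|?]]] //= h1 h2.
- exact: IH h1 h2 eb.
- exact: IH h1 h2 eb.
- move: h1 h2 => /andP [_ h1] /andP [_ h2]; exact: IH h1 h2 eb.
Qed.

Lemma rv_surj m s n : n < fib (2 * m + (if s then 2 else 1)) ->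
  exists r, [/\ size r = m, ok s r & rv r = n].
Proof.
elim: m s n => [|m IH] s n.
  case: s => h; exists [::]; split => //; move: h; rewrite muln0 add0n /=; lia.
have ef : 2 * m.+1 = 2 * m + 2 by lia.
set F := fib (2 * m + 2).
have e3 : fib (2 * m.+1 + 1) = F + fib (2 * m + 1).
  rewrite /F; apply: fib_rec; lia.
have e4 : fib (2 * m.+1 + 2) = F + F + fib (2 * m + 1).
  rewrite (@fib_rec _ (2 * m + 3) (2 * m + 2)); try lia.
  rewrite (@fib_rec (2 * m + 3) (2 * m + 2) (2 * m + 1)); rewrite /F; lia.
have h1 : fib (2 * m + 1) <= F by apply: fib_mono; lia.
move=> hn.
have [hlt|hge] := ltnP n F.
  have [r [hs ho hv]] := IH true n hlt.
  exists (0 :: r); split => //; first (by rewrite /= hs); by rewrite rv_cons hv.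
case: s hn; rewrite ?e3 ?e4 => hn.
- have [hlt2|hge2] := ltnP n (F + F).
  + have [r [hs ho hv]] := IH true (n - F) ltac:(lia).
    exists (1 :: r); split => //; first (by rewrite /= hs); rewrite rv_cons hv hs -/F; lia.
  + have [r [hs ho hv]] := IH false (n - F - F) ltac:(lia).
    exists (2 :: r); split => //; first (by rewrite /= hs); rewrite rv_cons hv hs -/F; lia.
- have [r [hs ho hv]] := IH false (n - F) ltac:(lia).
  exists (1 :: r); split => //; first (by rewrite /= hs); rewrite rv_cons hv hs -/F; lia.
Qed.

Lemma strip r : ok true r -> exists r', [/\ ok true r', rv r' = rv r & head 1 r' != 0].
Proof.
elim: r => [|x r IH] h; first by exists [::].
case: x h => [|x] h.
  have [r' [h1 h2 h3]] := IH h; exists r'; split => //; by rewrite rv_cons h2.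
by exists (x.+1 :: r).
Qed.

Lemma rv_lower x r : x != 0 -> fib (2 * size (x :: r)) <= rv (x :: r).
Proof.
move=> hx; rewrite rv_cons.
have -> : 2 * size (x :: r) = 2 * size r + 2 by rewrite /=; lia.
case: x hx => // x _; rewrite mulSn; lia.
Qed.

Lemma ok_uniq r1 r2 : ok true r1 -> ok true r2 -> head 1 r1 != 0 -> head 1 r2 != 0 ->
  rv r1 = rv r2 -> r1 = r2.
Proof.
move=> h1 h2 n1 n2 e.
suff es : size r1 = size r2 by exact: rv_inj es h1 h2 e.
have key : forall a b, ok true a -> ok true b -> head 1 b != 0 -> size a < size b -> rv a < rv b.
  move=> a [|y b] // ha hb nb hs.
  have hb1 : rv a < fib (2 * size a + 2) := rv_bound ha.
  have := @rv_lower y b nb.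
  have hm : fib (2 * size a + 2) <= fib (2 * size (y :: b)) by apply: fib_mono; lia.
  move=> hl; exact: leq_trans (leq_trans hb1 hm) hl.
have [hs|hs|//] := ltngtP (size r1) (size r2).
- by have := key _ _ h1 h2 n2 hs; lia.
- by have := key _ _ h2 h1 n1 hs; lia.
Qed.

Lemma lt_fib n : n < fib n.+2.
Proof.
suff : n < fib n.+2 /\ n.+1 < fib n.+3 by case.
elim: n => [|n [h1 h2]]; first by split.
split => //; rewrite [fib n.+4]fibSS; lia.
Qed.

Lemma cg_exists n : exists c, cg_valid c /\ cgval c = n.
Proof.
have hn : n < fib (2 * n + (if true then 2 else 1)).
  apply: leq_trans (lt_fib n) _; apply: fib_mono; lia.
have [r [_ ho hv]] := @rv_surj n true n hn.
have [r' [h1 h2 h3]] := strip ho.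
exists (rev r'); split; first by apply/validP.
by rewrite cgval_rev h2.
Qed.

Lemma cg_unique c1 c2 : cg_valid c1 -> cg_valid c2 -> cgval c1 = cgval c2 -> c1 = c2.
Proof.
rewrite -(revK c1) -(revK c2) !cgval_rev => /validP [h1 n1] /validP [h2 n2] e.
by rewrite (ok_uniq h1 h2 n1 n2 e).
Qed.

Lemma cg_coeffs_spec n : cg_valid (cg_coeffs n) /\ cgval (cg_coeffs n) = n.
Proof. exact: (epsilon_spec (inhabits [::]) (fun c => cg_valid c /\ cgval c = n) (cg_exists n)). Qed.

Lemma cg_coeffs_val c : cg_valid c -> cg_coeffs (cgval c) = c.
Proof.
move=> hc; have [h1 h2] := cg_coeffs_spec (cgval c); exact: cg_unique h1 hc h2.
Qed.

Fixpoint gnz (m : nat) (s : bool) : seq (seq nat) :=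
  match m with
  | 0 => [::]
  | m'.+1 => match m' with
     | 0 => [:: [:: 1]] ++ (if s then [:: [:: 2]] else [::])
     | _ => map (cons 0) (gnz m' true) ++ map (cons 1) (gnz m' s) ++
            (if s then map (cons 2) (gnz m' false) else [::])
     end
  end.

Lemma gnzE m s : gnz m.+2 s = map (cons 0) (gnz m.+1 true) ++ map (cons 1) (gnz m.+1 s) ++
            (if s then map (cons 2) (gnz m.+1 false) else [::]).
Proof. by []. Qed.

Lemma mem_consmap (y : nat) L x w : (x :: w \in map (cons y) L) = (x == y) && (w \in L).
Proof.
case: (eqVneq x y) => [->|ne] /=.
  by rewrite mem_map // => a b [].
by apply/mapP => -[w' _ [E _]]; rewrite E eqxx in ne.
Qed.

Lemma mem_gnz m s w : (w \in gnz m.+1 s) = [&& size w == m.+1, ok s w & last 0 w != 0].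
Proof.
elim: m s w => [|m IH] s w.
  case: w => [|x [|y w]]; case: s => //=; rewrite ?inE; case: x => [|[|[|x]]] //.
rewrite gnzE !mem_cat.
case: w => [|x w].
  have nilm : forall (y : nat) L, ([::] \in map (cons y) L) = false.
    by move=> y L; apply/mapP => -[].
  by case: s; rewrite !nilm.
have ifm : ((x :: w) \in (if s then map (cons 2) (gnz m.+1 false) else [::])) =
   s && (x == 2) && (w \in gnz m.+1 false) by case: s => //=; rewrite mem_consmap.
rewrite ifm !mem_consmap !IH {ifm}.
case: w => [|y w] /=.
  by case: s; rewrite ?andbF.
case: s; case: x => [|[|[|x]]] /=; rewrite ?andbF ?orbF //.
Qed.

Lemma size_gnz m : size (gnz m.+1 true) = fib (2 * m + 3) /\ size (gnz m.+1 false) = fib (2 * m + 2).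
Proof.
elim: m => [|m [h1 h2]]; first by [].
rewrite !gnzE !size_cat !size_map h1 h2 ?size_map ?h1 ?size_cat ?cats0 ?addn0.
have e5 : fib (2 * m.+1 + 3) = fib (2 * m + 4) + fib (2 * m + 3) by apply: fib_rec; lia.
have e4 : fib (2 * m + 4) = fib (2 * m + 3) + fib (2 * m + 2) by apply: fib_rec; lia.
have e4' : fib (2 * m.+1 + 2) = fib (2 * m + 3) + fib (2 * m + 2) by apply: fib_rec; lia.
rewrite e5 e4 e4'; lia.
Qed.

Lemma uniq_gnz m s : uniq (gnz m s).
Proof.
elim: m s => [|[|m] IH] s //; first by case: s.
have inj : forall y : nat, injective (cons y) by move=> y a b [].
have dis : forall (y z : nat) A B, y != z -> ~~ has (mem (map (cons y) A)) (map (cons z) B).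
  move=> y z A B ne; rewrite has_map; apply/hasPn => b _ /=.
  by rewrite mem_consmap eq_sym (negbTE ne).
rewrite gnzE; case: s.
- rewrite !cat_uniq !has_cat negb_or !map_inj_uniq // !IH !dis //.
- rewrite cats0 cat_uniq !map_inj_uniq // !IH dis //.
Qed.

Definition sel (p : nat -> bool) (c : seq nat) :=
  [seq fib (2 * j.+1) | j <- iota 0 (size c) & p (nth 0 c j)].

Lemma mem_sel p c y : y \in sel p c <-> exists j, [/\ j < size c, p (nth 0 c j) & y = fib (2 * j.+1)].
Proof.
split.
- move=> /mapP [j]; rewrite mem_filter mem_iota => /andP [hp hj] ->.
  exists j; split => //; lia.
- move=> [j [hj hp ->]]; apply/mapP; exists j => //.
  rewrite mem_filter mem_iota hp /=; lia.
Qed.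

Lemma all_sel p c (a : pred nat) : all a (sel p c) <->
  forall j, j < size c -> p (nth 0 c j) -> a (fib (2 * j.+1)).
Proof.
rewrite all_map all_filter; split.
- move=> /allP h j hj hp.
  have hj' : j \in iota 0 (size c) by rewrite mem_iota; lia.
  by have := h j hj'; rewrite /= hp.
- move=> h; apply/allP => j; rewrite mem_iota => hj; apply/implyP => hp; apply: h => //; lia.
Qed.

Lemma fib2_inj a b : fib (2 * a.+1) = fib (2 * b.+1) -> a = b.
Proof. move=> e; have := fib_inj _ _ e; lia. Qed.
Lemma fib2_le a b : fib (2 * a.+1) <= fib (2 * b.+1) -> a <= b.
Proof. move=> e; have := (fib_le_iff (_ : 2 <= 2 * a.+1) (_ : 2 <= 2 * b.+1)).1 e; lia. Qed.

Lemma headrev w : nth 0 (rev w) 0 = last 0 w.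
Proof. by case/lastP: w => [|w x] //; rewrite rev_rcons /= last_rcons. Qed.

Lemma ok_zeros s w n : ok s (w ++ nseq n 0) = ok s w.
Proof.
elim: w s => [|x w IH] s /=.
  elim: n s => // n IHn s /=; exact: IHn.
by case: x => [|[|[|x]]] //; rewrite IH.
Qed.

Section Main.
Variables (k l t : nat).
Hypotheses (hk : 1 <= k) (hl : 1 <= l) (ht : 1 <= t <= 2).

Lemma shape_nth u j : size u = l ->
  nth 0 (nseq (k-1) 0 ++ rcons u t) j =
  if j < k-1 then 0 else if j - (k-1) < l then nth 0 u (j-(k-1))
  else if j - (k-1) == l then t else 0.
Proof.
move=> hu; rewrite nth_cat size_nseq; case: ltnP => hj; first by rewrite nth_nseq hj.
by rewrite nth_rcons hu.
Qed.

Lemma fibK : fib (2 * k + 2 * l) = fib (2 * (k + l - 1).+1).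
Proof. congr fib; lia. Qed.

Lemma condsA c : cg_valid c ->
  (is_min (fib (2 * k)) (sel (fun x => x != 0) c) /\
   is_max (fib (2 * k + 2 * l)) (sel (fun x => x != 0) c) /\
   is_max (fib (2 * k + 2 * l)) (sel (fun x => x == t) c)) <->
  exists u, [/\ c = nseq (k-1) 0 ++ rcons u t, size u = l & nth 0 u 0 != 0].
Proof.
move=> hc; rewrite fibK.
have fk : fib (2 * k) = fib (2 * (k - 1).+1) by congr fib; lia.
rewrite fk; split.
- move=> [[minin minall] [[maxin maxall] [tin _]]].
  move/mem_sel: maxin => [j [hj hjz /fib2_inj hF]].
  have hlast : nth 0 c (size c).-1 != 0.
    case: c hc hj {hjz minin minall maxall tin} => // x c [_ [hl1 _]] _.
    by rewrite nth_last.
  move/all_sel: maxall => maxall.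
  have := maxall (size c).-1 ltac:(lia) hlast => /fib2_le hle.
  have hsz : size c = k + l by lia.
  move/mem_sel: tin => [j' [hj' /eqP ht' /fib2_inj hF']].
  move/mem_sel: minin => [j0 [hj0 hz0 /fib2_inj h0]].
  move/all_sel: minall => minall.
  have hzero : forall j, j < k - 1 -> nth 0 c j = 0.
    move=> i hi; apply/eqP; apply/negPn/negP => hnz.
    have := minall i ltac:(lia) hnz => /fib2_le; lia.
  exists (take l (drop (k-1) c)); split.
  + apply: (@eq_from_nth _ 0).
      rewrite size_cat size_nseq size_rcons size_takel; [lia| rewrite size_drop; lia].
    move=> i hi; rewrite shape_nth; last by rewrite size_takel // size_drop; lia.
    case: ifP => hi1; first by rewrite hzero.
    case: ifP => hi2.
      rewrite nth_take // nth_drop; congr nth; lia.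
    case: ifP => hi3; last by move: hi; rewrite hsz; lia.
    rewrite -ht'; congr nth; move: hi; rewrite hsz; lia.
  + rewrite size_takel // size_drop; lia.
  + rewrite nth_take; last lia.
    by rewrite nth_drop addn0 h0.
- move=> [u [-> hu hu0]].
  have hs : size (nseq (k - 1) 0 ++ rcons u t) = k + l.
    rewrite size_cat size_nseq size_rcons; lia.
  have nt : nth 0 (nseq (k - 1) 0 ++ rcons u t) (k + l - 1) = t.
    rewrite shape_nth //; do 2 (case: ifP => ?; first lia). by case: ifP => //; lia.
  split; [split|split; split].
  + apply/mem_sel; exists (k-1); split => //; first by rewrite hs; lia.
    by rewrite shape_nth // ltnn subnn hl.
  + apply/all_sel => j hj; rewrite shape_nth // => hnz.
    apply: fib_mono; move: hnz; case: ifP => //; lia.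
  + apply/mem_sel; exists (k + l - 1); split => //; first by rewrite hs; lia.
    by rewrite nt; case: (t) ht.
  + apply/all_sel => j hj _; apply: fib_mono; move: hj; rewrite hs; lia.
  + apply/mem_sel; exists (k + l - 1); split => //; first by rewrite hs; lia.
    by rewrite nt.
  + apply/all_sel => j hj _; apply: fib_mono; move: hj; rewrite hs; lia.
Qed.
End Main.

Lemma count_t k l t : 1 <= k -> 1 <= l -> 1 <= t <= 2 ->
  card_is (fun n => in_A k n /\ is_max (fib (2 * k + 2 * l)) (CG n)
                     /\ is_max (fib (2 * k + 2 * l)) (CGsel (fun x => x == t) n))
          (size (gnz l (t == 1))).
Proof.
move=> hk hl ht.
case: l hl => // l' _; set l := l'.+1.
set g := fun w => nseq (k-1) 0 ++ rcons (rev w) t.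
have grev : forall w, rev (g w) = t :: w ++ nseq (k-1) 0.
  by move=> w; rewrite /g rev_cat rev_rcons revK rev_nseq.
have okt : forall w, ok true (t :: w) = ok (t == 1) w.
  by move=> w; clear g grev; case: t ht => [|[|[|?]]].
have gval : forall w, w \in gnz l (t == 1) -> cg_valid (g w).
  move=> w; rewrite mem_gnz => /and3P [_ ho _].
  rewrite -[g w]revK; apply/validP; rewrite grev okt ok_zeros ho; split => //=; lia.
exists (map (fun w => cgval (g w)) (gnz l (t == 1))); split; last split.
- rewrite map_inj_in_uniq ?uniq_gnz // => w1 w2 h1 h2 e.
  have := cg_unique (gval _ h1) (gval _ h2) e => /(congr1 rev); rewrite !grev => -[].
  move: h1 h2; rewrite !mem_gnz => /and3P [/eqP s1 _ _] /and3P [/eqP s2 _ _].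
  move/(congr1 (take l)); rewrite !take_size_cat //.
- move=> n; split.
  + move=> /mapP [w hw ->].
    have hv := gval _ hw.
    rewrite /in_A /CG /CGsel cg_coeffs_val //.
    have := (@condsA k l t hk isT ht _ hv).2; rewrite /sel => -[].
      exists (rev w); split => //.
        by move: hw; rewrite mem_gnz size_rev => /and3P [/eqP -> _ _].
      by rewrite headrev; move: hw; rewrite mem_gnz => /and3P [_ _ ->].
    move=> h1 [h2 h3]; split; last by split.
    split => //.
    rewrite /g -rcons_cat cgval_rcons.
    have : 0 < fib (2 * (size (nseq (k - 1) 0 ++ rev w)).+1).
      have -> : 2 * (size (nseq (k - 1) 0 ++ rev w)).+1 =
                (2 * size (nseq (k - 1) 0 ++ rev w)).+1.+1 by lia.
      exact: fib_pos.
    case: (t) ht => // t' _; rewrite mulSn; lia.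
  + move=> [[_ hmin] [hmax ht2]].
    have [hv hn] := cg_coeffs_spec n.
    have := (@condsA k l t hk isT ht _ hv).1 (conj hmin (conj hmax ht2)).
    move=> [u [hc hu hu0]].
    apply/mapP; exists (rev u); last by rewrite /g revK -hc hn.
    rewrite mem_gnz size_rev hu eqxx /=.
    move: hv; rewrite -[cg_coeffs n]revK => /validP [ho _].
    rewrite hc rev_cat rev_rcons rev_nseq okt ok_zeros in ho.
    by rewrite ho -headrev revK.
- by rewrite size_map.
Qed.

Theorem corollary3p4 (k l : nat) (hk : 1 <= k) (hl : 1 <= l) :
  card_is (fun n => in_A k n /\ is_max (fib (2 * k + 2 * l)) (CG n)
                     /\ is_max (fib (2 * k + 2 * l)) (CG1 n))
          (fib (2 * l + 1))
  /\
  card_is (fun n => in_A k n /\ is_max (fib (2 * k + 2 * l)) (CG n)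
                     /\ is_max (fib (2 * k + 2 * l)) (CG2 n))
          (fib (2 * l)).
Proof.
have e1 : size (gnz l true) = fib (2 * l + 1).
  case: l hl => // l' _; have [-> _] := size_gnz l'; congr fib; lia.
have e2 : size (gnz l false) = fib (2 * l).
  clear e1; case: l hl => // l' _; have [_ ->] := size_gnz l'; congr fib; lia.
split.
- have H : card_is (fun n => in_A k n /\ is_max (fib (2 * k + 2 * l)) (CG n)
                     /\ is_max (fib (2 * k + 2 * l)) (CGsel (fun x => x == 1) n))
          (size (gnz l true)) := @count_t k l 1 hk hl isT.
  by rewrite e1 in H.
- have H : card_is (fun n => in_A k n /\ is_max (fib (2 * k + 2 * l)) (CG n)
                     /\ is_max (fib (2 * k + 2 * l)) (CGsel (fun x => x == 2) n))
          (size (gnz l false)) := @count_t k l 2 hk hl isT.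
  by rewrite e2 in H.
Qed.
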